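(* Let $r,m$ be positive integers with $m\ge20r$ and let $B=(T,D,\lambda)$ be an upwards closed quasi-bush with no coat hangers. If $\mathrm{wcol}_{9r}(B,\prec)\le m$ for some linear order $\prec$ on $V(T)$, and for every $w\in V(T)$ we have $|\mathrm{IN}(w,B)|\le m$ or $|\mathrm{OUT}(w,B)|\le m$, then $G(B)$ does not contain an $r$-shallow topological minor isomorphic to a clique on $m^{7}$ vertices.
   Context: A quasi-bush $B=(T,D,\lambda)$: a rooted tree $T$, a set $D$ of pointers from leaves of $T$ to nodes of $T$ (every leaf points to the root), and $\lambda\colon D\to\{0,1\}$. $v\le_T w$ means $v$ is an ancestor of $w$ (including $v=w$); $T(a)$ is the subtree of descendants of $a$. $G(B)$ is the directed graph on the leaves of $T$ where, for distinct leaves $u,v$ and $w$ the lowest ancestor of $v$ with $(u,w)\in D$, $(u,v)$ is an arc iff $\lambda((u,w))=1$; $w$ is the connection point of $(u,v)$. Quasi-bushes are assumed to represent undirected graphs, i.e., $G(B)$ is symmetric, and it is identified with the corresponding undirected graph. $B$ is upwards closed if $(u,w)\in D$ and $w'\le_T w$ imply $(u,w')\in D$. A coat hanger is a subtree $T(a)$ such that $a$ is neither the root nor a leaf, and some leaf $v$ has a pointer labeled $1$ to the parent of $a$ but no pointer to any node of $T(a)$. $\mathrm{IN}(w,B)$ (resp. $\mathrm{OUT}(w,B)$) is the set of all $u$ (resp. $v$) such that $w$ is the connection point of some arc $(u,v)$ of $G(B)$. $\mathrm{wcol}_{r}(B,\prec)$ is computed in the Gaifman graph of $B$ (vertex set $V(T)$,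 edges the tree edges and pointers): the maximum over $v$ of the number of $u$ such that some path of length at most $r$ from $v$ to $u$ has $u$ as its $\prec$-minimum. A graph $H$ is an $r$-shallow topological minor of $G$ if there are vertices $p(u)$, $u\in V(H)$, and internally vertex-disjoint paths of length at most $2r+1$ joining $p(u)$ and $p(v)$ for each edge $uv$ of $H$. *)

(* Defs.v *)
From mathcomp Require Import all_boot all_order.
Set Implicit Arguments. Unset Strict Implicit. Unset Printing Implicit Defensive.

Section QuasiBush.
Variable V : finType.

Definition is_rooted_tree (rt : V) (par : V -> V) : Prop :=
  par rt = rt /\ forall v, iter #|V| par v = rt.

Definition anc (par : V -> V) (v w : V) : bool :=
  [exists k : 'I_#|V|.+1, iter k par w == v].

Definition leaf (rt : V) (par : V -> V) (v : V) : bool :=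
  ~~ [exists u, (u != rt) && (par u == v)].

(* D : rel V  (pointer (u,w) in D iff D u w), lam : labels of pointers. *)
Definition is_quasi_bush (rt : V) (par : V -> V) (D : rel V) : Prop :=
  [/\ is_rooted_tree rt par,
      (forall u w, D u w -> leaf rt par u)
    & (forall u, leaf rt par u -> D u rt)].

Definition conn_pt (par : V -> V) (D : rel V) (u v w : V) : bool :=
  [&& anc par w v, D u w &
      [forall w', (anc par w' v && D u w') ==> anc par w' w]].

Definition arc_at rt par (D lam : rel V) (u v w : V) : bool :=
  [&& leaf rt par u, leaf rt par v, u != v, conn_pt par D u v w & lam u w].

(* arcs of G(B) (vertices of G(B) are the leaves of T) *)
Definition GB rt par (D lam : rel V) : rel V :=
  fun u v => [exists w, arc_at rt par D lam u v w].

Definition IN rt par (D lam : rel V) (w : V) : {set V} :=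
  [set u | [exists v, arc_at rt par D lam u v w]].
Definition OUT rt par (D lam : rel V) (w : V) : {set V} :=
  [set v | [exists u, arc_at rt par D lam u v w]].

Definition upwards_closed (par : V -> V) (D : rel V) : Prop :=
  forall u w w', D u w -> anc par w' w -> D u w'.

Definition coat_hanger rt par (D lam : rel V) (a : V) : Prop :=
  [/\ a != rt, ~~ leaf rt par a &
      exists v, [/\ leaf rt par v, D v (par a), lam v (par a) &
                    forall x, anc par a x -> ~~ D v x]].

Definition no_coat_hangers rt par (D lam : rel V) : Prop :=
  forall a, ~ coat_hanger rt par D lam a.

Definition gaifman rt par (D : rel V) : rel V :=
  fun a b => [&& a != b &
     [|| (a != rt) && (par a == b), (b != rt) && (par b == a), D a b | D b a]].

Definition linear_order (lt : rel V) : Prop :=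
  [/\ irreflexive lt, transitive lt & forall x y, x != y -> lt x y || lt y x].

(* wr E lt u k v <=> there is a walk of length <= k from v to u in E
   all of whose vertices other than u are lt-larger than u
   (i.e. u is the lt-minimum of the walk). *)
Fixpoint wr (E : rel V) (lt : rel V) (u : V) (k : nat) (v : V) : bool :=
  if k is k'.+1 then
    (v == u) || (lt u v && [exists x, E v x && wr E lt u k' x])
  else v == u.

Definition wreach (E lt : rel V) (r : nat) (v : V) : {set V} :=
  [set u | wr E lt u r v].

Definition wcol rt par (D : rel V) (r : nat) (lt : rel V) : nat :=
  \max_(v : V) #|wreach (gaifman rt par D) lt r v|.

Definition internal (x : V) (s : seq V) : seq V := behead (belast x s).

Definition shallow_top_clique (Vx : pred V) (E : rel V) (r n : nat) : Prop :=
  exists (p : 'I_n -> V) (P : 'I_n -> 'I_n -> seq V),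
    [/\ injective p,
        (forall i, Vx (p i)),
        (forall i j : 'I_n, i < j ->
           [/\ path E (p i) (P i j), last (p i) (P i j) = p j,
               uniq (p i :: P i j) & size (P i j) <= 2 * r + 1]),
        (forall i j : 'I_n, i < j ->
           forall x, x \in internal (p i) (P i j) -> x \notin codom p)
      & (forall i j i' j' : 'I_n, i < j -> i' < j' -> (i, j) != (i', j') ->
           [disjoint internal (p i) (P i j) & internal (p i') (P i' j')])].

End QuasiBush.

(* Main.v *)
Require Import Defs.
From mathcomp Require Import all_boot all_order zify.
Set Implicit Arguments. Unset Strict Implicit. Unset Printing Implicit Defensive.

Section Aux.
Variables (V : finType) (rt : V) (par : V -> V) (D lam : rel V).

Lemma iter_rt (Ht : is_rooted_tree rt par) n v : iter (n + #|V|) par v = rt.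
Proof.
case: Ht => Hr Hi; rewrite iterD Hi; elim: n => //= n ->; exact Hr.
Qed.

Definition E' a b := (a == b) || gaifman rt par D a b.

Lemma gaifman_sym a b : gaifman rt par D a b = gaifman rt par D b a.
Proof.
rewrite /gaifman eq_sym; case: (b != a) => //=.
case: (D a b); case: (D b a); rewrite ?orbT //= !orbF orbC //.
Qed.

Lemma E'_sym a b : E' a b = E' b a.
Proof. by rewrite /E' eq_sym gaifman_sym. Qed.

Lemma E'_D a b : D a b -> E' a b.
Proof. rewrite /E' /gaifman; case: eqP => //= _ Dab; by rewrite Dab !orbT. Qed.

Lemma arc_pt (Ht : is_rooted_tree rt par) u v w :
  upwards_closed par D -> no_coat_hangers rt par D lam ->
  arc_at rt par D lam u v w -> E' w v.
Proof.
move=> Hup Hnc /and5P[Lu Lv Huv /and3P[Awv Duw /forallP Hmin] Luw].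
case/existsP: Awv => k /eqP Hk.
have ex : exists k, iter k par v == w by exists k; apply/eqP.
case: (ex_minnP ex) => k0 /eqP Hk0 Hkmin.
have k0le : k0 <= #|V|.
  have := Hkmin k (introT eqP Hk); have := ltn_ord k; lia.
have Hr := Ht.1.
case: k0 Hk0 Hkmin k0le => [|[|k1]] Hk0 Hkmin k0le.
- by rewrite /E' -Hk0 eqxx.
- have wv : w != v.
    apply/eqP=> e; have := Hkmin 0; rewrite /= e eqxx => /(_ isT); done.
  have vrt : v != rt.
    apply/eqP => e; move: wv; rewrite -Hk0 /= e Hr eqxx; done.
  rewrite /E' /gaifman wv (negbTE wv) /=; apply/orP; right; apply/orP; left.
  by rewrite vrt -Hk0 eqxx.
- set a := iter k1.+1 par v.
  have paw : par a = w by rewrite -Hk0.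
  have aw : a != w.
    apply/eqP => e; have := Hkmin k1.+1; rewrite /a in e; rewrite e eqxx => /(_ isT).
    by rewrite ltnn.
  have art : a != rt by apply/eqP=> e; move: aw; rewrite -paw e Hr eqxx.
  have nla : ~~ leaf rt par a.
    rewrite /leaf negbK; apply/existsP; exists (iter k1 par v).
    rewrite /a /= eqxx andbT; apply/eqP => e; move: art; rewrite /a /= e Hr eqxx.
    done.
  case: (boolP [exists x, anc par a x && D u x]) => [/existsP[x /andP[Aax Dux]] | Hno];
    last first.
    exfalso; apply: (Hnc a); split => //; exists u; split; rewrite ?paw //.
    move=> x Ax; apply/negP=> Dx; move/negP: Hno; apply; apply/existsP; exists x.
    by rewrite Ax Dx.
  have Dua : D u a := Hup u x a Dux Aax.
  have Aav : anc par a v.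
    apply/existsP; have H : k1.+1 < #|V|.+1 by lia.
    by exists (Ordinal H).
  have := Hmin a; rewrite Aav Dua /= => /existsP [j /eqP Hj].
  have cyc : forall c, iter (c * j.+1) par a = a.
    elim => [|c IH]; first by []; rewrite mulSn iterD IH iterSr paw; exact Hj.
  have := cyc #|V|; rewrite mulnC mulSn addnC iter_rt // => e.
  by move: art; rewrite -e eqxx.
Qed.


Lemma wr_S (E lt : rel V) u k v : wr E lt u k v -> wr E lt u k.+1 v.
Proof.
elim: k v => [|k IH] v /=; first by move=> ->.
case/orP=> [->//|/andP[l /existsP[x /andP[e w]]]].
apply/orP; right; rewrite l; apply/existsP; exists x; rewrite e /=; exact: IH.
Qed.

Lemma wr_le (E lt : rel V) u k k' v : k <= k' -> wr E lt u k v -> wr E lt u k' v.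
Proof.
move=> kk H; rewrite -(subnKC kk); elim: (k' - k) => [|d IH]; first by rewrite addn0.
by rewrite addnS; apply: wr_S.
Qed.

Lemma wr_step (E lt : rel V) u k v x : (v == u) || lt u v -> (v == x) || E v x ->
  wr E lt u k x -> wr E lt u k.+1 v.
Proof.
case/orP => [/eqP-> _ _ | luv]; first by rewrite /= eqxx.
case/orP=> [/eqP-> | Evx] H; first exact: wr_S.
rewrite /=; apply/orP; right; rewrite luv /=; apply/existsP; exists x; rewrite Evx H //.
Qed.

Lemma wr_walk (E lt : rel V) u a s : path (fun a b => (a == b) || E a b) a s ->
  all (fun x => (x == u) || lt u x) (a :: s) -> u \in a :: s -> wr E lt u (size s) a.
Proof.
elim: s a => [|b s IH] a /=.
  by rewrite inE => _ _ /eqP->; rewrite eqxx.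
move=> /andP[eab pth] /andP[la /andP[lb ls]]; rewrite inE => /orP[/eqP<-|mem].
  by rewrite eqxx.
apply: wr_step la eab _; apply: IH pth _ mem; by rewrite /= lb ls.
Qed.

Lemma exists_min (lt : rel V) (s : seq V) x0 : linear_order lt ->
  exists2 z, z \in x0 :: s & all (fun x => (x == z) || lt z x) (x0 :: s).
Proof.
case=> Hirr Htr Htot.
elim: s x0 => [|y s IH] x0.
  by exists x0; rewrite ?inE /= eqxx.
have [z zin /allP zall] := IH y.
case: (eqVneq x0 z) => [e|ne].
  exists z; first by rewrite inE zin orbT.
  apply/allP => x; rewrite inE => /orP[/eqP->|xin]; first by rewrite e eqxx.
  exact: zall.
case/orP: (Htot _ _ ne) => l.
  exists x0; first by rewrite inE eqxx.
  apply/allP => x; rewrite inE => /orP[/eqP->|xin]; first by rewrite eqxx.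
  case/orP: (zall x xin) => [/eqP->|lzx]; first by rewrite l orbT.
  by rewrite (Htr _ _ _ l lzx) orbT.
exists z; first by rewrite inE zin orbT.
apply/allP => x; rewrite inE => /orP[/eqP->|xin]; first by rewrite l orbT.
exact: zall.
Qed.

Definition wit u v := odflt u [pick w | arc_at rt par D lam u v w].

Fixpoint gw x s := if s is y :: s' then wit x y :: y :: gw y s' else [::].

Lemma wit_arc u v : GB rt par D lam u v -> arc_at rt par D lam u v (wit u v).
Proof. rewrite /wit; case: pickP => [w -> //|H /existsP[w]]; by rewrite H. Qed.

Lemma gw_path (Ht : is_rooted_tree rt par) x s : upwards_closed par D ->
  no_coat_hangers rt par D lam ->
  path (GB rt par D lam) x s -> path E' x (gw x s).
Proof.
move=> Hup Hnc; elim: s x => //= y s IH x /andP[g p].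
have A := wit_arc g.
rewrite IH // (arc_pt Ht Hup Hnc A) andbT.
case/and5P: A => _ _ _ /and3P[_ Dxw _] _; rewrite andbT; exact: E'_D.
Qed.

Lemma size_gw x s : size (gw x s) = (size s).*2.
Proof. by elim: s x => //= y s IH x; rewrite IH. Qed.

Lemma last_gw x s : last x (gw x s) = last x s.
Proof. by elim: s x => //= y s IH x; exact: IH. Qed.

Lemma mem_gw x s z : path (GB rt par D lam) x s -> z \in gw x s ->
  z \in s \/ exists a b, [/\ a \in x :: s, b \in x :: s & arc_at rt par D lam a b z].
Proof.
elim: s x => //= y s IH x /andP[g p]; rewrite !inE => /orP[/eqP->|/orP[/eqP->|m]].
- right; exists x, y; rewrite !inE !eqxx ?orbT; split => //; exact: wit_arc.
- by left; rewrite eqxx.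
- case: (IH y p m) => [h|[a [b [ha hb hab]]]].
    by left; rewrite h orbT.
  right; exists a, b; split => //; by rewrite inE ?ha ?hb orbT.
Qed.


Definition Nz m z := z |: (if #|IN rt par D lam z| <= m then IN rt par D lam z
                           else OUT rt par D lam z).

Lemma claim (Ht : is_rooted_tree rt par) (lt : rel V) m r x0 s :
  upwards_closed par D -> no_coat_hangers rt par D lam ->
  linear_order lt -> 0 < r -> path (GB rt par D lam) x0 s -> size s <= (2 * r).+1 ->
  exists z y, [/\ z \in wreach (gaifman rt par D) lt (9 * r) x0,
                  z \in wreach (gaifman rt par D) lt (9 * r) (last x0 s),
                  y \in x0 :: s & y \in Nz m z].
Proof.
move=> Hup Hnc Hlin r0 Hp Hs.
set g := gw x0 s.
have [z zin zall] := exists_min g x0 Hlin.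
have Hpg : path E' x0 g := gw_path Ht Hup Hnc Hp.
have sz : size g <= 9 * r by rewrite size_gw -mul2n; lia.
have F : z \in wreach (gaifman rt par D) lt (9 * r) x0.
  rewrite inE; apply: wr_le sz _; exact: (wr_walk (E := gaifman rt par D) Hpg zall zin).
have B : z \in wreach (gaifman rt par D) lt (9 * r) (last x0 s).
  rewrite inE -(last_gw x0 s) -/g.
  have e1 : last x0 g :: rev (belast x0 g) = rev (x0 :: g) by rewrite [in RHS]lastI rev_rcons.
  apply: (@wr_le _ _ _ (size (rev (belast x0 g)))).
    by rewrite size_rev size_belast.
  apply: (wr_walk (E := gaifman rt par D)).
  - rewrite rev_path; apply: (sub_path _ Hpg) => a b; rewrite /E' eq_sym gaifman_sym //.
  - rewrite e1 all_rev; exact zall.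
  - rewrite e1 mem_rev; exact zin.
move: zin; rewrite inE => /orP[/eqP ez| zg].
  exists z, z; split => //; first by rewrite ez inE eqxx.
  by rewrite /Nz in_setU1 eqxx.
case: (mem_gw Hp zg) => [zs | [a [b [ha hb hab]]]].
  exists z, z; split => //; first by rewrite inE zs orbT.
  by rewrite /Nz in_setU1 eqxx.
case: (leqP #|IN rt par D lam z| m) => hIN.
  exists z, a; split => //.
  rewrite /Nz hIN in_setU1; apply/orP; right; rewrite inE; apply/existsP; by exists b.
exists z, b; split => //.
rewrite /Nz leqNgt hIN /= in_setU1; apply/orP; right; rewrite inE; apply/existsP; by exists a.
Qed.

Lemma card_Nz m z : (#|IN rt par D lam z| <= m \/ #|OUT rt par D lam z| <= m) ->
  #|Nz m z| <= m.+1.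
Proof.
move=> H; rewrite /Nz; apply: leq_trans (leq_card_setU _ _) _; rewrite cards1 add1n ltnS.
case: ifP => // /negbT; rewrite -ltnNge => h; case: H => //; lia.
Qed.

End Aux.

Lemma card_bigcup_le (I T : finType) (P : pred I) (F : I -> {set T}) :
  #|\bigcup_(i | P i) F i| <= \sum_(i | P i) #|F i|.
Proof.
elim/big_rec2: _ => [|i k U _ IH]; first by rewrite cards0.
apply: leq_trans (leq_card_setU _ _) _; by rewrite leq_add2l.
Qed.

Lemma path_dec (V : finType) (x y : V) s : s != [::] -> y \in x :: s ->
  [|| y == x, y \in internal x s | y == last x s].
Proof.
case: s => // c s _ H; move: H; rewrite [x :: _]lastI mem_rcons /internal.
have -> : belast x (c :: s) = x :: belast c s by [].
rewrite [behead _]/= inE => H; apply/or3P.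
by case/orP: H => [H|/orP[H|H]]; [constructor 3 | constructor 1 | constructor 2].
Qed.

Lemma core (V : finType) n (p : 'I_n -> V) (Q : 'I_n -> 'I_n -> seq V) (a b a' b' : 'I_n) y :
  injective p ->
  (forall i j : 'I_n, i < j -> last (p i) (Q i j) = p j) ->
  (forall i j : 'I_n, i < j -> forall x, x \in internal (p i) (Q i j) -> x \notin codom p) ->
  (forall i j i' j' : 'I_n, i < j -> i' < j' -> (i, j) != (i', j') ->
     [disjoint internal (p i) (Q i j) & internal (p i') (Q i' j')]) ->
  a < b -> a' < b' -> y \in p a :: Q a b -> y \in p a' :: Q a' b' ->
  (if y == p a then b else a) = (if y == p a' then b' else a') -> a = a' /\ b = b'.
Proof.
move=> pinj Hl Hi Hd ab ab' m1 m2.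
have ne : forall i j : 'I_n, i < j -> Q i j != [::].
  move=> i j ij; apply/eqP => e; have := Hl i j ij; rewrite e /= => /pinj eij.
  by move: ij; rewrite eij ltnn.
have pneq : forall i j : 'I_n, i < j -> (p j == p i) = false.
  move=> i j ij; apply/eqP=> /pinj e; by move: ij; rewrite e ltnn.
have h1 := path_dec (ne _ _ ab) m1; have h2 := path_dec (ne _ _ ab') m2.
rewrite (Hl _ _ ab) in h1; rewrite (Hl _ _ ab') in h2; move: h2 h1.
case/or3P => [/eqP e2 | i2 | /eqP e2]; case/or3P => [/eqP e1 | i1 | /eqP e1].
- rewrite e1 in e2; subst y; move/pinj: e2 => e; subst a'; rewrite eqxx => -> //.
- by move: (Hi _ _ ab _ i1); rewrite e2 codom_f.
- rewrite e1 in e2; subst y; move/pinj: e2 => e; subst a'.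
  rewrite eqxx (pneq _ _ ab) => e; subst; lia.
- by move: (Hi _ _ ab' _ i2); rewrite e1 codom_f.
- case: (eqVneq (a, b) (a', b')) => [[-> ->] //| nab].
  by move: (disjointFr (Hd _ _ _ _ ab ab' nab) i1); rewrite i2.
- by move: (Hi _ _ ab' _ i2); rewrite e1 codom_f.
- rewrite e1 in e2; subst y; move/pinj: e2 => e; subst b'.
  rewrite eqxx (pneq _ _ ab') => e; subst; lia.
- by move: (Hi _ _ ab _ i1); rewrite e2 codom_f.
- rewrite e1 in e2; subst y; move/pinj: e2 => e; subst b'.
  by rewrite (pneq _ _ ab) (pneq _ _ ab') => e; subst a'.
Qed.

Unset Implicit Arguments.

Theorem lemma7p33 (V : finType) (rt : V) (par : V -> V) (D lam : rel V)
    (r m : nat) :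
  0 < r -> 0 < m -> 20 * r <= m ->
  is_quasi_bush rt par D ->
  symmetric (GB rt par D lam) ->
  upwards_closed par D ->
  no_coat_hangers rt par D lam ->
  (exists lt : rel V, linear_order lt /\ wcol rt par D (9 * r) lt <= m) ->
  (forall w : V, #|IN rt par D lam w| <= m \/ #|OUT rt par D lam w| <= m) ->
  ~ shallow_top_clique (leaf rt par) (GB rt par D lam) r (m ^ 7).
Proof.
move=> r0 m0 rm [Ht Hl1 Hl2] Hsym Hup Hnc [lt [Hlin Hw]] Hio [p [P [pinj pleaf Hpath Hint Hdisj]]].
set n := m ^ 7 in p P pinj pleaf Hpath Hint Hdisj *.
pose W v := wreach (gaifman rt par D) lt (9 * r) v.
have HW : forall v, #|W v| <= m.
  move=> v; apply: leq_trans Hw; rewrite /wcol.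
  exact: (@leq_bigmax _ (fun v => #|wreach (gaifman rt par D) lt (9 * r) v|) v).
pose F (a b : 'I_n) := [pick zy : V * V | [&& zy.1 \in W (p a), zy.1 \in W (p b),
   zy.2 \in p a :: P a b & zy.2 \in Nz rt par D lam m zy.1]].
have HF : forall a b : 'I_n, a < b -> exists z y, F a b = Some (z, y) /\
   [&& z \in W (p a), z \in W (p b), y \in p a :: P a b & y \in Nz rt par D lam m z].
  move=> a b ab; case: (Hpath a b ab) => pth lst _ sz.
  rewrite /F; case: pickP => [[z y] H|H]; first by exists z, y.
  exfalso; have sz1 : size (P a b) <= (2 * r).+1 by rewrite -addn1.
  have [z [y [h1 h2 h3 h4]]] := claim Ht m Hup Hnc Hlin r0 pth sz1.
  rewrite lst in h2; have := H (z, y); by rewrite /= h1 h2 h3 h4.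
pose ord2 (ij : 'I_n * 'I_n) := if ij.1 < ij.2 then ij else (ij.2, ij.1).
pose g (ab : 'I_n * 'I_n) : 'I_n * V * V :=
  if F ab.1 ab.2 is Some zy then (if zy.2 == p ab.1 then ab.2 else ab.1, zy.1, zy.2)
  else (ab.1, p ab.1, p ab.1).
pose f (ij : 'I_n * 'I_n) := (g (ord2 ij), ij.1 < ij.2).
pose S := [set ij : 'I_n * 'I_n | ij.1 != ij.2].
have o2lt : forall ij, ij \in S -> (ord2 ij).1 < (ord2 ij).2.
  case=> i j; rewrite inE /ord2 /=; case: (ltngtP i j) => //= e.
  by rewrite (val_inj e) eqxx.
have gS : forall ab : 'I_n * 'I_n, ab.1 < ab.2 -> exists z y,
    g ab = (if y == p ab.1 then ab.2 else ab.1, z, y) /\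
   [&& z \in W (p ab.1), z \in W (p ab.2), y \in p ab.1 :: P ab.1 ab.2 & y \in Nz rt par D lam m z].
  case=> a b /= ab; have [z [y [e h]]] := HF a b ab; exists z, y; by rewrite /g /= e.
have Hl : forall i j : 'I_n, i < j -> last (p i) (P i j) = p j.
  by move=> i j ij; case: (Hpath i j ij).
have finj : {in S &, injective f}.
  move=> ij ij' hS hS'; rewrite /f => -[eg eb].
  have o2 : ord2 ij = ord2 ij'.
    have [z [y [e1 h1]]] := gS _ (o2lt _ hS); have [z' [y' [e2 h2]]] := gS _ (o2lt _ hS').
    move: eg; rewrite e1 e2 => -[ee ez ey]; subst z' y'.
    case/and4P: h1 => _ _ m1 _; case/and4P: h2 => _ _ m2 _.
    have [ea eb'] := core pinj Hl Hint Hdisj (o2lt _ hS) (o2lt _ hS') m1 m2 ee.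
    by rewrite [ord2 ij]surjective_pairing [ord2 ij']surjective_pairing ea eb'.
  clear eg; move: o2 eb; case: ij hS => i j; case: ij' hS' => i' j'; rewrite /ord2 /=.
  move=> _ _; case: ifP => h1; case: ifP => h2 /= o2 eb; first by rewrite o2.
  - by case: eb.
  - by case: eb.
  - by case: o2 => -> ->.
have cS : n * n <= #|S| + n.
  have := cardsC S; rewrite card_prod card_ord => <-; rewrite leq_add2l.
  apply: leq_trans (_ : #|[set (i, i) | i : 'I_n]| <= n).
    apply: subset_leq_card; apply/subsetP => -[i j]; rewrite !inE /= negbK => /eqP <-.
    by apply/imsetP; exists i.
  by apply: leq_trans (leq_imset_card _ _) _; rewrite card_ord.
have Bnd : f @: S \subset \bigcup_(e : 'I_n) \bigcup_(z in W (p e))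
     \bigcup_(y in Nz rt par D lam m z) [set (e, z, y, true); (e, z, y, false)].
  apply/subsetP => t /imsetP [ij hS ->].
  have [z [y [e h]]] := gS _ (o2lt _ hS).
  rewrite /f e; case/and4P: h => hz1 hz2 _ hy.
  apply/bigcupP; exists (if y == p (ord2 ij).1 then (ord2 ij).2 else (ord2 ij).1) => //.
  apply/bigcupP; exists z; first by case: ifP.
  apply/bigcupP; exists y => //.
  by rewrite !inE; case: (_ < _); rewrite eqxx ?orbT.
have cB : #|\bigcup_(e : 'I_n) \bigcup_(z in W (p e))
     \bigcup_(y in Nz rt par D lam m z) [set (e, z, y, true); (e, z, y, false)]|
     <= n * (m * (m.+1 * 2)).
  apply: leq_trans (card_bigcup_le _ _) _.
  apply: leq_trans (_ : \sum_(e : 'I_n) (m * (m.+1 * 2)) <= _); last first.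
    by rewrite big_const card_ord iter_addn_0 mulnC.
  apply: leq_sum => e _.
  apply: leq_trans (card_bigcup_le _ _) _.
  apply: leq_trans (_ : \sum_(z in W (p e)) (m.+1 * 2) <= _); last first.
    by rewrite sum_nat_const leq_mul2r HW orbT.
  apply: leq_sum => z _.
  apply: leq_trans (card_bigcup_le _ _) _.
  apply: leq_trans (_ : \sum_(y in Nz rt par D lam m z) 2 <= _); last first.
    by rewrite sum_nat_const leq_mul2r card_Nz ?orbT.
  apply: leq_sum => y _; by rewrite cards2; case: (_ != _).
have cf : #|S| <= n * (m * (m.+1 * 2)).
  by rewrite -(card_in_imset finj); apply: leq_trans (subset_leq_card Bnd) cB.
have k6 : m ^ 2 <= m ^ 6 by rewrite leq_pexp2l.
have nk : n = m * m ^ 6 by rewrite /n expnS.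
have n0 : 0 < n by rewrite expn_gt0 m0.
have : n * n <= n * (m * (m.+1 * 2)).+1 by rewrite mulnS addnC; apply: leq_trans cS _; rewrite leq_add2r.
rewrite leq_pmul2l // nk; rewrite expnS expn1 in k6.
nia.
Qed.
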